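(* Let $\mathcal{G}_{36}$ be the network described in the context, with nodes $(i,j)$, $1\le i\le 3$, $1\le j\le 6$. Consider the coloring $K$ of its nodes with five colors $a_0,a_1,a_2,b_1,b_2$ defined by: for $1\le j\le 3$, node $(i,j)$ has color $a_r$ where $r\equiv j-i \pmod 3$, $r\in\{0,1,2\}$; for $4\le j\le 6$, node $(i,j)$ has color $b_1$ if $j-3=i$ and color $b_2$ if $j-3\neq i$. Then $K$ is balanced, but $K$ is not an orbit coloring, i.e. there is no subgroup $\Sigma\subseteq \mathbb{S}_3\times\mathbb{S}_6$ whose orbits on the node set are exactly the color classes of $K$.
   Context: For integers $m,n\ge1$, the network $\mathcal{G}_{mn}$ has node set $\{(i,j):1\le i\le m,\ 1\le j\le n\}$ (an $m\times n$ array; $i$ indexes rows, $j$ columns), all nodes of the same type. For each ordered pair of distinct nodes $(c,d)$ there is exactly one arrow with head $c$ and tail $d$, whose type is: ''row'' if $c,d$ lie in the same row, ''column'' if they lie in the same column, ''diagonal'' otherwise; in addition each node has an internal arrow from itself to itself (a fourth type). The group $\mathbb{S}_m\times\mathbb{S}_n$ acts on the nodes by $(\sigma,\tau)\cdot(i,j)=(\sigma(i),\tau(j))$; these permutations preserve arrow types and form the symmetry group of $\mathcal{G}_{mn}$. A coloring is a map from nodes to a set of colors (colorings are identified if they induce the same partition of the nodes). A coloring is balanced if whenever nodes $c,d$ have the same color there is a bijection between the input arrows of $c$ and those of $d$ preserving arrow type and the color of the tail node; equivalently, for every arrow type and every color $k$, the number of input arrows of that type to $c$ with tail of color $k$ equals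 the corresponding number for $d$. For a subgroup $\Sigma$ of the symmetry group, the orbit coloring of $\Sigma$ is the coloring whose color classes are the $\Sigma$-orbits on nodes; a coloring is an orbit coloring if it equals the orbit coloring of some such subgroup. *)

(* Defs.v *)
From mathcomp Require Import all_boot all_order all_fingroup.
Set Implicit Arguments. Unset Strict Implicit. Unset Printing Implicit Defensive.

(* Nodes of G_{mn}: (i,j) with i : 'I_m (row), j : 'I_n (column); 0-indexed. *)
Definition node (m n : nat) : finType := ('I_m * 'I_n)%type.

Inductive arrow_type := RowA | ColA | DiagA | InternalA.
Definition arrow_type_eqb (a b : arrow_type) : bool :=
  match a, b with
  | RowA, RowA | ColA, ColA | DiagA, DiagA | InternalA, InternalA => true
  | _, _ => false end.

(* type of the unique arrow with head c and tail d (the internal arrow when c = d) *)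
Definition atype (m n : nat) (c d : node m n) : arrow_type :=
  if c == d then InternalA
  else if c.1 == d.1 then RowA
  else if c.2 == d.2 then ColA
  else DiagA.

Definition in_count (m n : nat) (C : eqType) (col : node m n -> C)
    (c : node m n) (t : arrow_type) (k : C) : nat :=
  #|[set d : node m n | arrow_type_eqb (atype c d) t && (col d == k)]|.

Definition balanced (m n : nat) (C : eqType) (col : node m n -> C) : Prop :=
  forall c d : node m n, col c = col d ->
    forall (t : arrow_type) (k : C), in_count col c t k = in_count col d t k.

Definition sym_act (m n : nat) (g : ({perm 'I_m} * {perm 'I_n})%type)
    (c : node m n) : node m n := (g.1 c.1, g.2 c.2).

Definition is_orbit_coloring (m n : nat) (C : eqType) (col : node m n -> C) : Prop :=
  exists Sigma : {group ({perm 'I_m} * {perm 'I_n})%type},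
    forall c d : node m n,
      col c = col d <-> exists2 g, g \in Sigma & sym_act g c = d.

(* The coloring K of G_36: colors a_0,a_1,a_2,b_1,b_2 encoded as 0,1,2,3,4.
   With 0-indexed (i,j): column j < 3 gets a_r, r = (j - i) mod 3;
   column j >= 3 gets b_1 if j - 3 = i, b_2 otherwise. *)
Definition K36 (c : node 3 6) : nat :=
  let i := nat_of_ord c.1 in let j := nat_of_ord c.2 in
  if j < 3 then (j + 3 - i) %% 3
  else if j - 3 == i then 3 else 4.

(* Main.v *)
Require Import Defs.
From mathcomp Require Import all_boot all_order all_fingroup.

Lemma in_countE (m n : nat) (C : eqType) (col : node m n -> C) c t k :
  in_count col c t k =
  count (fun d => arrow_type_eqb (atype c d) t && (col d == k)) (enum (node m n)).
Proof.
rewrite /in_count cardsE cardE /enum_mem size_filter count_filter.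
by apply: eq_count => x; rewrite /= !inE andbT.
Qed.

Definition mk (n k : nat) : 'I_n.+1 := Ordinal (ltn_pmod k (ltn0Sn n)).
Definition L : seq (node 3 6) := [seq (mk 2 i, mk 5 j) | i <- iota 0 3, j <- iota 0 6].
Lemma Lperm : perm_eq (enum (node 3 6)) L.
Proof.
apply: uniq_perm; first exact: enum_uniq.
  by vm_compute.
move=> [[i Hi] [j Hj]]; rewrite mem_enum; symmetry.
by case: i Hi => [|[|[|i]]] Hi //; case: j Hj => [|[|[|[|[|[|j]]]]]] Hj //; vm_compute.
Qed.

Definition types := [:: RowA; ColA; DiagA; InternalA].

Lemma bal_comp t :
  all (fun c => all (fun d => (K36 c == K36 d) ==>
     all (fun k =>
        count (fun e => arrow_type_eqb (atype c e) t && (K36 e == k)) L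
        == count (fun e => arrow_type_eqb (atype d e) t && (K36 e == k)) L)
       (iota 0 5)) L) L.
Proof. by case: t; vm_compute. Qed.

Lemma K36_lt c : K36 c < 5.
Proof. rewrite /K36; case: ifP => _; last by case: ifP.
by apply: (leq_trans (ltn_pmod _ _)). Qed.

Lemma balK : balanced K36.
Proof.
move=> c d Hcd t k; rewrite !in_countE.
case: (ltnP k 5) => Hk.
  rewrite !((seq.permP Lperm) _).
  have memL : forall x, x \in L by move=> x; rewrite -(perm_mem Lperm) mem_enum.
  have := bal_comp t => /allP /(_ c (memL c)) /allP /(_ d (memL d)).
  rewrite Hcd eqxx implyTb => /allP.
  have Hk' : k \in iota 0 5 by rewrite mem_iota.
  by move=> /(_ k Hk') /eqP.
have H0 : forall x, (K36 x == k) = false.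
  by move=> x; apply/negbTE; rewrite neq_ltn (leq_trans (K36_lt x) Hk).
by rewrite !(eq_count (a2 := pred0)) ?count_pred0 // => x /=; rewrite H0 andbF.
Qed.

Lemma notorb : ~ is_orbit_coloring K36.
Proof.
case=> Sigma H.
pose o0 : 'I_3 := Ordinal (isT : 0 < 3).
pose o1 : 'I_3 := Ordinal (isT : 1 < 3).
pose p1 : 'I_6 := Ordinal (isT : 1 < 6).
pose p4 : 'I_6 := Ordinal (isT : 4 < 6).
pose p5 : 'I_6 := Ordinal (isT : 5 < 6).
have [g Hg Hgc] := (H (o0, p4) (o0, p5)).1 erefl.
have pres : forall x, K36 x = K36 (sym_act g x).
  by move=> x; apply: (H x (sym_act g x)).2; exists g.
have E1 : g.1 o0 = o0 by have := congr1 fst Hgc.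
have E2 : g.2 p4 = p5 by have := congr1 snd Hgc.
have H1 := pres (o1, p4). have H2 := pres (o1, p1). have H3 := pres (o0, p1).
rewrite /sym_act /= E1 E2 in H1 H2 H3.
move: H1 H2 H3; case: (g.1 o1) => a Ha; case: (g.2 p1) => b Hb.
rewrite /K36 /=.
by case: a Ha => [|[|[|a]]] // _; case: b Hb => [|[|[|[|[|[|b]]]]]].
Qed.

Theorem mainTheorem1 : balanced K36 /\ ~ is_orbit_coloring K36.
Proof. split; [exact: balK | exact: notorb]. Qed.
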